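(* For $n\ge 3$, the family $\mathcal{F}=\{\emptyset\}\cup\{\{i\}:i\in[n]\}\cup\{\{i,j\}: i,j\in[n], i\ne j\}\cup\{\{1,2,\dots,i\}: 3\le i\le n\}$ is induced-$\bowtie$-saturated in $\mathcal{B}_n$; hence $\mathrm{isat}(n,\bowtie)\le\binom{n}{2}+2n-1$.
   Context: $\mathcal{B}_n$ denotes the Boolean lattice $(2^{[n]},\subseteq)$. A family $\mathcal{F}\subseteq 2^{[n]}$ (ordered by inclusion) is induced-$\mathcal{P}$-saturated if it contains no induced copy of $\mathcal{P}$ (an injection $f$ with $u\le v\iff f(u)\subseteq f(v)$) but every family $\mathcal{F}'$ with $\mathcal{F}\subsetneq\mathcal{F}'\subseteq 2^{[n]}$ contains one. $\mathrm{isat}(n,\mathcal{P})$ is the minimum size of such a family. The butterfly $\bowtie$ is the four-element poset on $\{A,B,C,D\}$ whose only strict relations are $A<B$, $A<D$, $C<B$, $C<D$. *)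

(* Defs.v *)
From mathcomp Require Import all_boot.
Set Implicit Arguments.
Unset Strict Implicit.
Unset Printing Implicit Defensive.

(* A finite poset P is given by a carrier finType and its (reflexive) order
   relation [le].  The Boolean lattice B_n is {set 'I_n}, where the element
   i : 'I_n stands for i+1 in [n] = {1,...,n}. *)

Definition has_induced_copy (P : finType) (le : rel P) (n : nat)
    (F : {set {set 'I_n}}) : bool :=
  [exists f : {ffun P -> {set 'I_n}},
    [&& injectiveb f, [forall u, f u \in F] &
        [forall u, forall v, le u v == (f u \subset f v)]]].

Definition induced_saturated (P : finType) (le : rel P) (n : nat)
    (F : {set {set 'I_n}}) : bool :=
  ~~ has_induced_copy le F &&
  [forall F' : {set {set 'I_n}}, (F \proper F') ==> has_induced_copy le F'].

(* isat(n, P): minimum size of an induced-P-saturated family in B_n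
   (defaults to 2^n + 1 if none exists; irrelevant once one exists). *)
Definition isat (P : finType) (le : rel P) (n : nat) : nat :=
  \big[minn/(2 ^ n).+1]_(F : {set {set 'I_n}} |
       induced_saturated le F) #|F|.

(* The butterfly on 'I_4 with A = 0, B = 1, C = 2, D = 3:
   strict relations A<B, A<D, C<B, C<D. *)
Definition butterfly_le : rel 'I_4 :=
  fun u v => (u == v) || ((val u \in [:: 0; 2]) && (val v \in [:: 1; 3])).

Definition prop23_family (n : nat) : {set {set 'I_n}} :=
  [set S : {set 'I_n} | (#|S| <= 2) ||
     [exists i : 'I_n.+1, (3 <= i) && (S == [set j : 'I_n | val j < i])]].

(* Main.v *)
Require Import Defs.
From mathcomp Require Import all_boot.

Lemma small_sub (n:nat) (A B C D : {set 'I_n}) :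
  A \subset B -> C \subset B -> A \subset D -> C \subset D ->
  ~~ (A \subset C) -> ~~ (C \subset A) -> #|B| <= 2 -> B \subset D.
Proof.
move=> AB CB AD CD /subsetPn[a aA aC] /subsetPn[c cC cA] hB.
have ac : a != c by apply/eqP=> e; rewrite e cC in aC.
have sub : [set a; c] \subset B by rewrite subUset !sub1set (subsetP AB) // (subsetP CB).
have eqc : #|[set a; c]| = #|B| by apply/eqP; rewrite eqn_leq subset_leq_card // cards2 ac.
have /setP eB := (subset_cardP eqc sub).
apply/subsetP=> x; rewrite -eB !inE => /orP[]/eqP->; [exact: (subsetP AD)|exact: (subsetP CD)].
Qed.

Lemma pre_sub n (i j : nat) : i <= j -> [set x : 'I_n | x < i] \subset [set x : 'I_n | x < j].
Proof. move=> h; apply/subsetP=> x; rewrite !inE => xi; exact: leq_trans xi h. Qed.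

Lemma no_bf n (A B C D : {set 'I_n}) : B \in prop23_family n -> D \in prop23_family n ->
  A \subset B -> C \subset B -> A \subset D -> C \subset D ->
  ~~ (A \subset C) -> ~~ (C \subset A) -> ~~ (B \subset D) -> ~~ (D \subset B) -> False.
Proof.
move=> BF DF AB CB AD CD AC CA BD DB.
have bB : ~~ (#|B| <= 2) by apply: contra BD; exact: small_sub AB CB AD CD AC CA.
have bD : ~~ (#|D| <= 2) by apply: contra DB; exact: small_sub AD CD AB CB AC CA.
move: BF DF; rewrite !inE (negbTE bB) (negbTE bD) /= => /existsP[i /andP[_ /eqP eB]] /existsP[j /andP[_ /eqP eD]].
case: (leqP i j) => h.
  by move: BD; rewrite eB eD pre_sub.
by move: DB; rewrite eB eD pre_sub // ltnW.
Qed.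

From mathcomp Require Import zify.
From mathcomp Require Import zify.

Lemma part2 n (F' : {set {set 'I_n}}) : prop23_family n \proper F' -> has_induced_copy butterfly_le F'.
Proof.
case/properP=> sFF' [S SF' SnF].
have cS : 2 < #|S| by move: SnF; rewrite inE; case: leqP.
have [m0 m0S] : exists m0, m0 \in S.
  by apply/set0Pn; rewrite -card_gt0; apply: leq_trans cS.
case: (arg_maxnP (fun x : 'I_n => val x) m0S) => m mS0 mmax0.
have mS : m \in S := mS0.
have mmax : forall j, j \in S -> j <= m := mmax0.
have : 1 < #|S :\ m| by move: cS; rewrite (cardsD1 m) mS.
case/card_gt1P=> a [c [aS cS' ac]].
move: aS cS'; rewrite !inE => /andP[am aS] /andP[cm cS2].
have alt : a < m by rewrite ltn_neqAle mmax // andbT; apply: contra am => /eqP h; apply/eqP/val_inj.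
have clt : c < m by rewrite ltn_neqAle mmax // andbT; apply: contra cm => /eqP h; apply/eqP/val_inj.
have vac : val a != val c by [].
have : [exists x : 'I_n, (x < m) && (x \notin S)].
  apply: contraNT SnF => /existsPn NE; rewrite inE; apply/orP; right; apply/existsP.
  exists (Ordinal (ltn_ord m : m.+1 < n.+1)) => /=; apply/andP; split; first by move: alt clt vac; clear; case: a c => a ? [c ?] /=; lia.
  apply/eqP/setP=> y; rewrite inE ltnS; apply/idP/idP; first exact: mmax.
  rewrite leq_eqVlt => /orP[/eqP e|ym]; first by rewrite (_ : y = m) //; apply: val_inj.
  by move: (NE y); rewrite ym /= negbK.
case/existsP=> x /andP[xm xS].
have xa : val x != val a by apply: contra xS => /eqP e; rewrite (_ : x = a) //; apply: val_inj.
have xc : val x != val c by apply: contra xS => /eqP e; rewrite (_ : x = c) //; apply: val_inj.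
have m3 : 3 <= m by move: alt clt vac xm xa xc; clear; case: a c x => a ? [c ?] [x ?] /=; lia.
pose P := [set j : 'I_n | j < m].
pose f := [ffun u : 'I_4 => if val u == 0 then [set a] else if val u == 1 then S
                            else if val u == 2 then [set c] else P].
have H u v : butterfly_le u v = (f u \subset f v).
  have aP : a \in P by rewrite inE.
  have cP : c \in P by rewrite inE.
  have mP : m \notin P by rewrite inE ltnn.
  have xP : x \in P by rewrite inE.
  have ca : (c == a) = false by apply/negbTE; rewrite eq_sym.
  have ac' : (a == c) = false by apply/negbTE.
  have S1 : (S \subset [set a]) = false by apply/negbTE/subsetPn; exists c => //; rewrite in_set1 ca.
  have S2 : (S \subset [set c]) = false by apply/negbTE/subsetPn; exists a => //; rewrite in_set1 ac'.
  have S3 : (S \subset P) = false by apply/negbTE/subsetPn; exists m.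
  have P1 : (P \subset [set a]) = false by apply/negbTE/subsetPn; exists c => //; rewrite in_set1 ca.
  have P2 : (P \subset [set c]) = false by apply/negbTE/subsetPn; exists a => //; rewrite in_set1 ac'.
  have P3 : (P \subset S) = false by apply/negbTE/subsetPn; exists x.
  case: u v => [[|[|[|[|u]]]] hu] [[|[|[|[|v]]]] hv] //; rewrite !ffunE /=;
   by rewrite ?subxx ?sub1set ?in_set1 ?ca ?ac' ?S1 ?S2 ?S3 ?P1 ?P2 ?P3 ?aS ?cS2 ?aP ?cP.
apply/existsP; exists f; apply/and3P; split.
- apply/injectiveP=> u v e.
  have := H u v; have := H v u; rewrite e subxx.
  by clear e; case: u v => [[|[|[|[|u]]]] hu] [[|[|[|[|v]]]] hv] //= _ _; apply: val_inj.
- apply/forallP=> u; rewrite ffunE.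
  have sing (y : 'I_n) : [set y] \in F' by apply: (subsetP sFF'); rewrite inE cards1.
  case: ifP => _; first exact: sing.
  case: ifP => _; first exact: SF'.
  case: ifP => _; first exact: sing.
  apply: (subsetP sFF'); rewrite inE; apply/orP; right; apply/existsP.
  exists (inord m); rewrite inordK ?m3 ?eqxx //; exact: ltnW (ltn_ord m).
- apply/forallP => u; apply/forallP => v; by rewrite H.
Qed.

Lemma part1 n : ~~ has_induced_copy butterfly_le (prop23_family n).
Proof.
apply/existsP=> [[f /and3P[_ /forallP hF /forallP hle]]].
have H u v : butterfly_le u v = (f u \subset f v) by exact/eqP/(forallP (hle u) v).
pose o0 := @Ordinal 4 0 isT; pose o1 := @Ordinal 4 1 isT; pose o2 := @Ordinal 4 2 isT; pose o3 := @Ordinal 4 3 isT.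
apply: (@no_bf n (f o0) (f o1) (f o2) (f o3)) => //; by rewrite -H.
Qed.

Lemma bm (I:finType) (P:pred I) (G:I->nat) i0 m : P i0 -> \big[minn/m]_(i | P i) G i <= G i0.
Proof.
move=> Pi; rewrite -big_filter.
have : i0 \in [seq i <- index_enum I | P i] by rewrite mem_filter Pi mem_index_enum.
elim: [seq i <- index_enum I | P i] => [//|a r IH]; rewrite inE big_cons.
case/orP=> [/eqP->|/IH h]; first exact: geq_minl.
exact: leq_trans (geq_minr _ _) h.
Qed.

Lemma card_fam n : 3 <= n -> #|prop23_family n| <= 'C(n, 2) + 2 * n - 1.
Proof.
move=> hn.
pose L k := [set A : {set 'I_n} | #|A| == k].
pose I := [set [set j : 'I_n | j < (val k).+3] | k : 'I_(n - 2)].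
have sub : prop23_family n \subset L 0 :|: L 1 :|: L 2 :|: I.
  apply/subsetP=> A; rewrite !inE => /orP[h|/existsP[i /andP[i3 /eqP ->]]].
    by move: h; rewrite leq_eqVlt ltnS leq_eqVlt ltnS leqn0 => /or3P[]->; rewrite ?orbT.
  apply/orP; right; apply/imsetP.
  have hi : i - 3 < n - 2 by move: (ltn_ord i) i3; lia.
  exists (Ordinal hi) => //=; apply/setP=> y; rewrite !inE; by have -> : (i - 3).+3 = i by lia.
apply: leq_trans (subset_leq_card sub) _.
apply: leq_trans (leq_card_setU _ _) _.
apply: leq_trans (leq_add (leq_card_setU _ _) (leq_imset_card _ _)) _.
apply: leq_trans (leq_add (leq_add (leq_card_setU _ _) (leqnn _)) (leqnn _)) _.
rewrite !card_draws card_ord card_ord bin0 bin1.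
lia.
Qed.

Theorem proposition2p3 (n : nat) (hn : 3 <= n) :
  induced_saturated butterfly_le (prop23_family n) /\
  isat butterfly_le n <= 'C(n, 2) + 2 * n - 1.
Proof.
have sat : induced_saturated butterfly_le (prop23_family n).
  apply/andP; split; first exact: part1.
  by apply/forallP=> F'; apply/implyP; exact: part2.
split=> //.
apply: (@leq_trans #|prop23_family n|); last exact: card_fam. rewrite /isat.
exact: (@bm _ (fun F => induced_saturated butterfly_le F) (fun F => #|F|) _ (2 ^ n).+1 sat).
Qed.
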